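(* Let $V:[-1,1]\to[0,\infty)$ be continuous, write $V(\lambda)$ for $V(\cos\lambda)$, assume $\lambda\mapsto V(\lambda)$ is $C^2(-\pi,\pi)$ and that there exist an interval $(a,b)\subset\sigma$ and constants $C_1,C_2>0$ with $\sup_{(a,b)}|V'''|\le C_1$ and $\rho\ge C_2$ on $(a,b)$. Then for any $\delta>0$, all $n$ and all $\lambda\in[-\pi,\pi]$ (all integrals over $[-\pi,\pi]$): $$\Big|\int(e^{i\lambda}-e^{i\mu})|K_n(\lambda,\mu)|^2d\mu\Big|\le\tfrac12\big[|\psi_{n-1}^{(n)}(\lambda)|^2+|\psi_n^{(n)}(\lambda)|^2\big],$$ $$\int|e^{i\lambda}-e^{i\mu}|^2|K_n(\lambda,\mu)|^2d\mu\le|\psi_{n-1}^{(n)}(\lambda)|^2+|\psi_n^{(n)}(\lambda)|^2,$$ $$\iint|e^{i\lambda}-e^{i\mu}|^2|K_n(\lambda,\mu)|^2d\lambda\,d\mu\le2,$$ $$\int_{|e^{i\lambda}-e^{i\mu}|>\delta}|K_n(\lambda,\mu)|^2d\mu\le\delta^{-2}\big[|\psi_{n-1}^{(n)}(\lambda)|^2+|\psi_n^{(n)}(\lambda)|^2\big],$$ $$\iint_{|e^{i\lambda}-e^{i\mu}|>\delta}|K_n(\lambda,\mu)|^2d\lambda\,d\mu\le2\delta^{-2}.$$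
   Context: For each $n$, let $P_k^{(n)}$, $k=0,1,2,\dots$, be obtained by the Gram–Schmidt procedure from $\{e^{ik\lambda}\}_{k\ge0}$ in $L^2([-\pi,\pi],e^{-nV(\lambda)}d\lambda)$, let $\psi_k^{(n)}(\lambda)=P_k^{(n)}(\lambda)e^{-nV(\lambda)/2}$ (orthonormal in $L^2[-\pi,\pi]$), and $K_n(\lambda,\mu)=\sum_{l=0}^{n-1}\psi_l^{(n)}(\lambda)\overline{\psi_l^{(n)}(\mu)}$. Here $\sigma$ and $\rho$ are the support and density of the limiting normalized counting measure of the eigenvalue angles for the density $p_n(\lambda_1,\dots,\lambda_n)=Z_n^{-1}\prod_{j<k}|e^{i\lambda_j}-e^{i\lambda_k}|^2\exp\{-n\sum_jV(\lambda_j)\}$ on $[-\pi,\pi]^n$ (this limit is known to exist, with compact support and bounded density, for $V\in C^2$). *)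

(* Defs.v *)
From HB Require Import structures.
From mathcomp Require Import all_boot all_order all_algebra.
From mathcomp.real_closed Require Export complex.
From mathcomp Require Import all_classical all_reals all_analysis.
Set Implicit Arguments. Unset Strict Implicit. Unset Printing Implicit Defensive.
Import Order.TTheory GRing.Theory Num.Theory.
Import numFieldNormedType.Exports.
Local Open Scope classical_set_scope.
Local Open Scope ring_scope.
Local Open Scope complex_scope.

Section Defs.
Variable R : realType.
Notation mu := (@lebesgue_measure R).

Definition Ipi : set R := `[- pi, pi]%classic.

Definition eix (x : R) : R[i] := (cos x +i* sin x)%C.

Definition sqnorm (z : R[i]) : R := (complex.Re z) ^+ 2 + (complex.Im z) ^+ 2.

Definition cint (f : R -> R[i]) : R[i] :=
  ((Rintegral mu Ipi (fun x => complex.Re (f x)))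
     +i* (Rintegral mu Ipi (fun x => complex.Im (f x))))%C.

Definition weight (V : R -> R) (n : nat) (x : R) : R := expR (- (n%:R * V (cos x))).

Definition Ppoly (c : nat -> nat -> nat -> R[i]) (n k : nat) (x : R) : R[i] :=
  \sum_(j < k.+1) c n k j * eix x ^+ j.

(* c describes the output of the Gram-Schmidt procedure applied to
   (e^{ik lambda})_{k>=0} in L^2([-pi,pi], e^{-nV} d lambda): P_k is in the span of
   e^{ij lambda}, j <= k, with positive leading coefficient, and the family is
   orthonormal. *)
Definition gram_schmidt_coefs (V : R -> R) (c : nat -> nat -> nat -> R[i]) : Prop :=
  forall n : nat,
    (forall k j : nat, (k < j)%N -> c n k j = 0) /\
    (forall k : nat, 0 < c n k k) /\
    (forall k l : nat,
        cint (fun x => (weight V n x)%:C * Ppoly c n k x * (Ppoly c n l x)^*)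
        = ((k == l)%:R)%:C).

Definition psi (V : R -> R) c (n k : nat) (x : R) : R[i] :=
  (expR (- (n%:R * V (cos x)) / 2))%:C * Ppoly c n k x.

Definition Kn (V : R -> R) c (n : nat) (x y : R) : R[i] :=
  \sum_(l < n) psi V c n l x * (psi V c n l y)^*.

(* iterated Lebesgue integral over [-pi,pi]^k of F : (nat -> R) -> R
   (only the first k coordinates are used) *)
Definition ncons (x : R) (l : nat -> R) : nat -> R :=
  fun j => if j is j'.+1 then l j' else x.

Fixpoint iint (k : nat) (F : (nat -> R) -> R) : R :=
  match k with
  | 0%N => F (fun _ => 0)
  | k'.+1 => Rintegral mu Ipi (fun x => iint k' (fun l => F (ncons x l)))
  end.

(* unnormalized joint eigenvalue-angle density
   prod_{j<k} |e^{i l_j} - e^{i l_k}|^2 exp{-n sum_j V(l_j)} *)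
Definition jdens (V : R -> R) (n : nat) (l : nat -> R) : R :=
  (\prod_(j < n) \prod_(k < n | (j < k)%N) sqnorm (eix (l j) - eix (l k)))
  * expR (- (n%:R * \sum_(j < n) V (cos (l j)))).

(* expectation, under p_n, of the normalized counting measure tested on f *)
Definition mean_counting (V : R -> R) (n : nat) (f : R -> R) : R :=
  iint n (fun l => (n%:R^-1 * \sum_(j < n) f (l j)) * jdens V n l)
  / iint n (jdens V n).

Definition limit_density (V : R -> R) (rho : R -> R) : Prop :=
  (forall x, 0 <= rho x) /\ measurable_fun Ipi rho /\
  forall f : R -> R, {within Ipi, continuous f} ->
    (fun n : nat => mean_counting V n f) @ \oo
      --> Rintegral mu Ipi (fun x => f x * rho x).

Definition limit_support (rho : R -> R) : set R :=
  [set x | Ipi x /\ forall e : R, 0 < e ->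
      0 < Rintegral mu (Ipi `&` ball x e) rho].

End Defs.

(* Main.v *)
Require Import Defs.
From HB Require Import structures.
From mathcomp Require Import all_boot all_order all_algebra.
From mathcomp.real_closed Require Import complex.
From mathcomp Require Import all_classical all_reals all_analysis.
From mathcomp Require Import ring lra.
Import Order.TTheory GRing.Theory Num.Theory.
Import numFieldNormedType.Exports.
Local Open Scope classical_set_scope.
Local Open Scope ring_scope.
Local Open Scope complex_scope.
Set Implicit Arguments. Unset Strict Implicit. Unset Printing Implicit Defensive.
Section Gen.
Variable R : realType.
Implicit Types (f g : R -> R[i]).

Lemma ReD (x y : R[i]) : complex.Re (x + y) = complex.Re x + complex.Re y.
Proof. by case: x; case: y. Qed.
Lemma ImD (x y : R[i]) : complex.Im (x + y) = complex.Im x + complex.Im y.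
Proof. by case: x; case: y. Qed.
Lemma ReM (x y : R[i]) : complex.Re (x * y) = complex.Re x * complex.Re y - complex.Im x * complex.Im y.
Proof. by case: x => a b; case: y. Qed.
Lemma ImM (x y : R[i]) : complex.Im (x * y) = complex.Re x * complex.Im y + complex.Im x * complex.Re y.
Proof. by case: x => a b; case: y. Qed.
Lemma ReJ (x : R[i]) : complex.Re (x^*%R) = complex.Re x.
Proof. by case: x. Qed.
Lemma ImJ (x : R[i]) : complex.Im (x^*%R) = - complex.Im x.
Proof. by case: x. Qed.
Lemma ReN (x : R[i]) : complex.Re (- x) = - complex.Re x.
Proof. by case: x. Qed.
Lemma ImN (x : R[i]) : complex.Im (- x) = - complex.Im x.
Proof. by case: x. Qed.

Lemma sqnormE (x : R[i]) : (sqnorm x)%:C = x * x^*%R.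
Proof. case: x => a b; apply/eqP; rewrite eq_complex /= /sqnorm /=; apply/andP; split; apply/eqP; ring. Qed.

Lemma sqnormM (x y : R[i]) : sqnorm (x * y) = sqnorm x * sqnorm y.
Proof. rewrite /sqnorm ReM ImM; ring. Qed.
Lemma sqnormJ (x : R[i]) : sqnorm (x^*%R) = sqnorm x.
Proof. rewrite /sqnorm ReJ ImJ; ring. Qed.
Lemma sqnorm_ge0 (x : R[i]) : 0 <= sqnorm x.
Proof. by rewrite /sqnorm addr_ge0 // sqr_ge0. Qed.
Lemma sqnorm_eix (x : R) : sqnorm (eix x) = 1.
Proof. by rewrite /sqnorm /eix /= cos2Dsin2. Qed.
Lemma eixJ (x : R) : eix x * (eix x)^*%R = 1.
Proof. by rewrite -sqnormE sqnorm_eix. Qed.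

Lemma conjM (x y : R[i]) : (x * y)^*%R = x^*%R * y^*%R.
Proof. case: x => a b; case: y => c d; apply/eqP; rewrite eq_complex /=; apply/andP; split; apply/eqP; ring. Qed.
Lemma conjD (x y : R[i]) : (x + y)^*%R = x^*%R + y^*%R.
Proof. case: x => a b; case: y => c d; apply/eqP; rewrite eq_complex /=; apply/andP; split; apply/eqP; ring. Qed.
Lemma conjR (r : R) : (r%:C)^*%R = r%:C.
Proof. by apply/eqP; rewrite eq_complex /= oppr0 !eqxx. Qed.
Lemma conjK (x : R[i]) : (x^*%R)^*%R = x.
Proof. exact: conjCK. Qed.
Lemma conjB (x y : R[i]) : (x - y)^*%R = x^*%R - y^*%R.
Proof. case: x => a b; case: y => c d; apply/eqP; rewrite eq_complex /=; apply/andP; split; apply/eqP; ring. Qed.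
Lemma Re_sum (K : nat) (F : 'I_K -> R[i]) : complex.Re (\sum_(i < K) F i) = \sum_(i < K) complex.Re (F i).
Proof.
elim: K F => [|K IH] F; first by rewrite !big_ord0.
by rewrite !big_ord_recr ReD; congr (_ + _); exact: IH.
Qed.
Lemma realM (a b : R) : (a * b)%:C = a%:C * b%:C.
Proof. by apply/eqP; rewrite eq_complex /=; apply/andP; split; apply/eqP; ring. Qed.
Lemma realD (a b : R) : (a + b)%:C = a%:C + b%:C.
Proof. by apply/eqP; rewrite eq_complex /=; apply/andP; split; apply/eqP; ring. Qed.
Lemma conj_sum (K : nat) (F : 'I_K -> R[i]) : (\sum_(i < K) F i)^*%R = \sum_(i < K) (F i)^*%R.
Proof.
elim: K F => [|K IH] F; first by rewrite !big_ord0; apply/eqP; rewrite eq_complex /= oppr0 !eqxx.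
rewrite !big_ord_recr /= conjD; congr (_ + _); exact: IH.
Qed.

Definition good f := continuous (fun x => complex.Re (f x)) /\ continuous (fun x => complex.Im (f x)).

Lemma cD (a b : R -> R) : continuous a -> continuous b -> continuous (fun x => a x + b x).
Proof. move=> ca cb x. exact: (continuousD (ca x) (cb x)). Qed.
Lemma cM (a b : R -> R) : continuous a -> continuous b -> continuous (fun x => a x * b x).
Proof. move=> ca cb x. exact: (continuousM (ca x) (cb x)). Qed.
Lemma cN (a : R -> R) : continuous a -> continuous (fun x => - a x).
Proof. move=> ca x. exact: (continuousN (ca x)). Qed.
Lemma cB (a b : R -> R) : continuous a -> continuous b -> continuous (fun x => a x - b x).
Proof. by move=> ca cb; apply: cD => //; apply: cN. Qed.

Lemma cont_ext (a b : R -> R) : (forall x, a x = b x) -> continuous a -> continuous b.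
Proof. by move=> /funext ->. Qed.
Lemma good_ext f g : (forall x, f x = g x) -> good f -> good g.
Proof. by move=> /funext ->. Qed.

Lemma good_add f g : good f -> good g -> good (fun x => f x + g x).
Proof.
move=> [f1 f2] [g1 g2]; split.
  apply: (@cont_ext (fun x => complex.Re (f x) + complex.Re (g x))); first by move=> x; rewrite ReD.
  exact: cD.
apply: (@cont_ext (fun x => complex.Im (f x) + complex.Im (g x))); first by move=> x; rewrite ImD.
exact: cD.
Qed.
Lemma good_mul f g : good f -> good g -> good (fun x => f x * g x).
Proof.
move=> [f1 f2] [g1 g2]; split.
  apply: (@cont_ext (fun x => complex.Re (f x) * complex.Re (g x) - complex.Im (f x) * complex.Im (g x))); first by move=> x; rewrite ReM.
  by apply: cB; apply: cM.
apply: (@cont_ext (fun x => complex.Re (f x) * complex.Im (g x) + complex.Im (f x) * complex.Re (g x))); first by move=> x; rewrite ImM.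
by apply: cD; apply: cM.
Qed.
Lemma good_conj f : good f -> good (fun x => (f x)^*%R).
Proof.
move=> [f1 f2]; split.
  by apply: (@cont_ext (fun x => complex.Re (f x))); first by move=> x; rewrite ReJ.
apply: (@cont_ext (fun x => - complex.Im (f x))); first by move=> x; rewrite ImJ.
exact: cN.
Qed.
Lemma good_opp f : good f -> good (fun x => - f x).
Proof.
move=> [f1 f2]; split.
  apply: (@cont_ext (fun x => - complex.Re (f x))); first by move=> x; rewrite ReN.
  exact: cN.
apply: (@cont_ext (fun x => - complex.Im (f x))); first by move=> x; rewrite ImN.
exact: cN.
Qed.
Lemma good_cst (k : R[i]) : good (fun _ => k).
Proof. by split; apply: cst_continuous. Qed.
Lemma good_real (a : R -> R) : continuous a -> good (fun x => (a x)%:C).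
Proof. by move=> ca; split => //=; apply: cst_continuous. Qed.
Lemma good_eix : good (@eix R).
Proof. by split; [exact: continuous_cos | exact: continuous_sin]. Qed.
Lemma good_exp f k : good f -> good (fun x => f x ^+ k).
Proof.
move=> gf; elim: k => [|k IH].
  by apply: (@good_ext (fun _ => 1)); [move=> x; rewrite expr0 | exact: good_cst].
apply: (@good_ext (fun x => f x * f x ^+ k)); first by move=> x; rewrite exprS.
exact: good_mul.
Qed.
Lemma good_sum (K : nat) (F : nat -> R -> R[i]) : (forall i, good (F i)) ->
  good (fun x => \sum_(i < K) F i x).
Proof.
move=> gF; elim: K => [|K IH].
  by apply: (@good_ext (fun _ => 0)); [move=> x; rewrite big_ord0 | exact: good_cst].
apply: (@good_ext (fun x => \sum_(i < K) F i x + F K x)); first by move=> x; rewrite big_ord_recr.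
exact: good_add.
Qed.
Lemma good_sqnorm f : good f -> continuous (fun x => sqnorm (f x)).
Proof.
move=> [f1 f2]; rewrite /sqnorm; apply: cD.
  by apply: (@cont_ext (fun x => complex.Re (f x) * complex.Re (f x))); [move=> x; rewrite expr2|exact: cM].
by apply: (@cont_ext (fun x => complex.Im (f x) * complex.Im (f x))); [move=> x; rewrite expr2|exact: cM].
Qed.

Notation mu := (@lebesgue_measure R).
Lemma mIpi : measurable (@Ipi R).
Proof. exact: measurable_itv. Qed.
Lemma int_cont (a : R -> R) : continuous a -> mu.-integrable (@Ipi R) (EFin \o a).
Proof. move=> ca; apply: continuous_compact_integrable; first exact: segment_compact.
exact: continuous_subspaceT. Qed.

Lemma RintD (a b : R -> R) : continuous a -> continuous b ->
  Rintegral mu (@Ipi R) (fun x => a x + b x) = Rintegral mu (@Ipi R) a + Rintegral mu (@Ipi R) b.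
Proof. by move=> ca cb; rewrite RintegralD //; [exact: mIpi|exact: int_cont..]. Qed.
Lemma RintZ (a : R -> R) (r : R) : continuous a ->
  Rintegral mu (@Ipi R) (fun x => r * a x) = r * Rintegral mu (@Ipi R) a.
Proof. by move=> ca; rewrite RintegralZl //; [exact: mIpi|exact: int_cont]. Qed.
Lemma RintN (a : R -> R) : continuous a ->
  Rintegral mu (@Ipi R) (fun x => - a x) = - Rintegral mu (@Ipi R) a.
Proof. move=> ca; rewrite -mulN1r -RintZ //; congr Rintegral; apply/funext=> x; by rewrite mulN1r. Qed.

Lemma cintD f g : good f -> good g -> cint (fun x => f x + g x) = cint f + cint g.
Proof.
move=> [f1 f2] [g1 g2]; rewrite /cint.
rewrite (_ : (fun x => complex.Re (f x + g x)) = (fun x => complex.Re (f x) + complex.Re (g x))); last by apply/funext=> x; rewrite ReD.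
rewrite (_ : (fun x => complex.Im (f x + g x)) = (fun x => complex.Im (f x) + complex.Im (g x))); last by apply/funext=> x; rewrite ImD.
by rewrite !RintD.
Qed.
Lemma RintL (a b : R -> R) (r s : R) : continuous a -> continuous b ->
  Rintegral mu (@Ipi R) (fun x => r * a x + s * b x) =
  r * Rintegral mu (@Ipi R) a + s * Rintegral mu (@Ipi R) b.
Proof.
move=> ca cb; rewrite RintD; last 2 first.
- by apply: cM => //; exact: cst_continuous.
- by apply: cM => //; exact: cst_continuous.
by rewrite !RintZ.
Qed.

Lemma cintZ (k : R[i]) f : good f -> cint (fun x => k * f x) = k * cint f.
Proof.
move=> [f1 f2]; rewrite /cint.
rewrite (_ : (fun x => complex.Re (k * f x)) = (fun x => complex.Re k * complex.Re (f x) + (- complex.Im k) * complex.Im (f x))); last first.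
  by apply/funext=> x; rewrite ReM mulNr.
rewrite (_ : (fun x => complex.Im (k * f x)) = (fun x => complex.Re k * complex.Im (f x) + complex.Im k * complex.Re (f x))); last first.
  by apply/funext=> x; rewrite ImM.
rewrite !RintL //.
case: k => a b; apply/eqP; rewrite eq_complex /=; apply/andP; split; apply/eqP; ring.
Qed.

Lemma cintJ f : good f -> cint (fun x => (f x)^*%R) = (cint f)^*%R.
Proof.
move=> [f1 f2]; rewrite /cint.
rewrite (_ : (fun x => complex.Re ((f x)^*%R)) = (fun x => complex.Re (f x))); last first.
  by apply/funext=> x; rewrite ReJ.
rewrite (_ : (fun x => complex.Im ((f x)^*%R)) = (fun x => - complex.Im (f x))); last first.
  by apply/funext=> x; rewrite ImJ.
by rewrite RintN.
Qed.

Lemma cintN f : good f -> cint (fun x => - f x) = - cint f.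
Proof.
move=> gf; rewrite -mulN1r -cintZ //; congr cint; apply/funext=> x; by rewrite mulN1r.
Qed.

Lemma cintB f g : good f -> good g -> cint (fun x => f x - g x) = cint f - cint g.
Proof. by move=> gf gg; rewrite cintD ?cintN //; exact: good_opp. Qed.

Lemma cint_sum (K : nat) (F : nat -> R -> R[i]) : (forall i, good (F i)) ->
  cint (fun x => \sum_(i < K) F i x) = \sum_(i < K) cint (F i).
Proof.
move=> gF; elim: K => [|K IH].
  rewrite big_ord0 (_ : (fun x => \sum_(i < 0) F i x) = (fun _ => 0)); last first.
    by apply/funext=> x; rewrite big_ord0.
  rewrite /cint /=.
  rewrite (_ : (fun _ : R => (0:R)) = (fun x => 0 * 0)); last by apply/funext => x; rewrite mul0r.
  by rewrite RintZ ?mul0r //; exact: cst_continuous.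
rewrite big_ord_recr /= -IH -cintD //; last exact: good_sum.
by congr cint; apply/funext=> x; rewrite big_ord_recr.
Qed.

Lemma cint0 : cint (fun _ : R => 0 : R[i]) = 0.
Proof.
rewrite /cint /=.
rewrite (_ : (fun _ : R => (0:R)) = (fun x => 0 * 0)); last by apply/funext => x; rewrite mul0r.
by rewrite RintZ ?mul0r //; exact: cst_continuous.
Qed.

Lemma Rint0 : Rintegral mu (@Ipi R) (fun _ => 0) = 0.
Proof.
rewrite (_ : (fun _ : R => (0:R)) = (fun x => 0 * 0)); last by apply/funext => x; rewrite mul0r.
by rewrite RintZ ?mul0r //; exact: cst_continuous.
Qed.

Lemma Rint_cint (a : R -> R) : Rintegral mu (@Ipi R) a = complex.Re (cint (fun x => (a x)%:C)).
Proof. by []. Qed.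

End Gen.
Lemma lower_mono (R : realType) (D E : set R) (g h : R -> R) : measurable E -> D `<=` E ->
  (forall x, D x -> 0 <= g x) -> (forall x, E x -> 0 <= h x) ->
  (forall x, D x -> g x <= h x) -> (@lebesgue_measure R).-integrable E (EFin \o h) ->
  Rintegral (@lebesgue_measure R) D g <= Rintegral (@lebesgue_measure R) E h.
Proof.
move=> mE DE g0 h0 gh ih.
have le : (\int[(@lebesgue_measure R)]_(x in D) (g x)%:E <= \int[(@lebesgue_measure R)]_(x in E) (h x)%:E)%E.
  rewrite [X in (X <= _)%E]ge0_integralE; last by move=> x Dx; rewrite lee_fin g0.
  rewrite [X in (_ <= X)%E]ge0_integralE; last by move=> x Ex; rewrite lee_fin h0.
  apply: ge_ereal_sup => _ [s hs <-]; apply: ereal_sup_ubound; exists s => // x.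
  apply: le_trans (hs x) _; rewrite /patch; case: ifPn => [/set_mem Dx|_].
    by rewrite mem_set ?lee_fin ?gh //; apply: DE.
  by case: ifPn => [/set_mem Ex|_]; rewrite ?lee_fin ?h0.
have bfin : (\int[(@lebesgue_measure R)]_(x in E) (h x)%:E \is a fin_num)%E.
  by apply: integrable_fin_num.
rewrite /Rintegral.
move: le; have a0 : (0 <= \int[(@lebesgue_measure R)]_(x in D) (g x)%:E)%E.
  by apply: integral_ge0 => x Dx; rewrite lee_fin g0.
move: a0 bfin.
case: (\int[(@lebesgue_measure R)]_(x in D) (g x)%:E)%E => [r| |]; case: (\int[(@lebesgue_measure R)]_(x in E) (h x)%:E)%E => [r'| |] //=.
Qed.
Lemma Vcos_cont (R : realType) (V : R -> R) : {within `[-1, 1]%classic, continuous V} ->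
  continuous (fun t => V (cos t)).
Proof.
move=> HV x.
have Ac : `[-1, 1]%classic (cos x).
  by rewrite /= in_itv /= cos_geN1 cos_le1.
have hV := proj1 (subspace_continuousP _ _) HV (cos x) Ac.
apply: (@cvg_comp _ _ _ cos V _ (within `[-1, 1]%classic (nbhs (cos x)))); last exact: hV.
move=> P /= hP.
have H := @continuous_cos R x _ hP.
apply: (@filterS _ (nbhs x) _ _ _ _ H) => y /= Hy; apply: Hy.
by rewrite /= in_itv /= cos_geN1 cos_le1.
Qed.

Section Main.
Variable R : realType.
Variable V : R -> R.
Variable c : nat -> nat -> nat -> R[i].
Hypothesis HVc : continuous (fun t => V (cos t)).
Hypothesis gs : gram_schmidt_coefs V c.
Variable n : nat.

Local Notation P := (Ppoly c n).
Local Notation ps := (psi V c n).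
Definition Ef (x : R) : R := expR (- (n%:R * V (cos x)) / 2).

Lemma Ef_cont : continuous Ef.
Proof.
have hc : continuous (fun x => - (n%:R * V (cos x)) / 2).
  apply: cM; last exact: cst_continuous.
  by apply: cN; apply: cM; [exact: cst_continuous | exact: HVc].
move=> x; exact: (continuous_comp (hc x) (@continuous_expR R _)).
Qed.

Lemma good_P k : good (P k).
Proof.
have := @good_sum R k.+1 (fun j x => c n k j * eix x ^+ j).
apply=> j; apply: good_mul; first exact: good_cst.
apply: good_exp; exact: good_eix.
Qed.

Lemma good_psi k : good (ps k).
Proof. apply: good_mul; [exact: good_real Ef_cont | exact: good_P]. Qed.

Lemma ortho k l : cint (fun x => ps k x * (ps l x)^*%R) = ((k == l)%:R)%:C.
Proof.
have [_ [_ H]] := gs n; rewrite -H; congr cint; apply/funext => x.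
rewrite /psi /weight conjM conjR.
have -> : expR (- (n%:R * V (cos x))) = Ef x * Ef x.
  by rewrite /Ef -expRD; congr expR; field.
rewrite realM; ring.
Qed.

Lemma mono_span j : exists b : nat -> R[i], (forall l, (j < l)%N -> b l = 0) /\
  forall N, (j < N)%N -> forall x, eix x ^+ j = \sum_(l < N) b l * P l x.
Proof.
elim/ltn_ind: j => j IH.
have [B HB] : {B : nat -> nat -> R[i] & forall i, (i < j)%N ->
   (forall l, (i < l)%N -> B i l = 0) /\
   forall N, (i < N)%N -> forall x, eix x ^+ i = \sum_(l < N) B i l * P l x}.
  apply: (@boolp.choice nat (nat -> R[i]) (fun i b => (i < j)%N -> (forall l, (i < l)%N -> b l = 0) /\
    forall N, (i < N)%N -> forall x, eix x ^+ i = \sum_(l < N) b l * P l x)) => i.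
  case: (ltnP i j) => hij.
    by have [b hb] := IH i hij; exists b.
  by exists (fun _ => 0).
have [_ [cpos _]] := gs n.
have cjj : c n j j != 0 by rewrite gt_eqF.
exists (fun l => (((l == j)%:R : R[i]) - \sum_(i < j) c n j i * B i l) / c n j j); split.
  move=> l hl; rewrite (_ : (l == j) = false); last by apply/negbTE; rewrite neq_ltn hl orbT.
  rewrite big1 ?subr0 ?mul0r // => i _.
  by rewrite (proj1 (HB i (ltn_ord i)) l) ?mulr0 //; apply: ltn_trans hl.
move=> N hjN x.
have e1 : \sum_(l < N) (((l : nat) == j)%:R : R[i]) * P l x = P j x.
  rewrite (bigD1 (Ordinal hjN)) //= eqxx mul1r big1 ?addr0 // => i.
  by rewrite -val_eqE /= => /negbTE ->; rewrite mul0r.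
have e2 : \sum_(l < N) (\sum_(i < j) c n j i * B i l) * P l x = \sum_(i < j) c n j i * eix x ^+ i.
  under eq_bigr do rewrite mulr_suml.
  rewrite exchange_big; apply: eq_bigr => i _.
  rewrite (proj2 (HB i (ltn_ord i)) N _ x); last exact: ltn_trans (ltn_ord i) hjN.
  by rewrite mulr_sumr; apply: eq_bigr => l _; rewrite mulrA.
have e3 : P j x = \sum_(i < j) c n j i * eix x ^+ i + c n j j * eix x ^+ j.
  by rewrite /Ppoly big_ord_recr.
transitivity ((\sum_(l < N) (((l : nat) == j)%:R : R[i]) * P l x - \sum_(l < N) (\sum_(i < j) c n j i * B i l) * P l x) / c n j j).
  by rewrite e1 e2 e3 addrAC subrr add0r mulrC mulKf.
rewrite -sumrB mulr_suml; apply: eq_bigr => l _; ring.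
Qed.

Lemma spanB : {B : nat -> nat -> R[i] & forall j, (forall l, (j < l)%N -> B j l = 0) /\
  forall N, (j < N)%N -> forall x, eix x ^+ j = \sum_(l < N) B j l * P l x}.
Proof.
exact: (@boolp.choice nat (nat -> R[i]) (fun j b => (forall l, (j < l)%N -> b l = 0) /\
  forall N, (j < N)%N -> forall x, eix x ^+ j = \sum_(l < N) b l * P l x) mono_span).
Qed.

Lemma good_psiM k l : good (fun x => ps k x * (ps l x)^*%R).
Proof. by apply: good_mul; [exact: good_psi | apply: good_conj; exact: good_psi]. Qed.

Lemma proj (d : nat -> R[i]) N m : (m < N)%N ->
  cint (fun x => (\sum_(k < N) d k * ps k x) * (ps m x)^*%R) = d m.
Proof.
move=> hm.
have gF : forall k, good ((fun k x => d k * (ps k x * (ps m x)^*%R)) k).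
  by move=> k; apply: good_mul; [exact: good_cst | exact: good_psiM].
have h := @cint_sum R N _ gF.
transitivity (\sum_(k < N) cint ((fun k x => d k * (ps k x * (ps m x)^*%R)) k)).
  rewrite -h; congr cint; apply/funext=> x; rewrite mulr_suml; apply: eq_bigr => k _; by rewrite mulrA.
rewrite (eq_bigr (fun k : 'I_N => d k * (((k : nat) == m)%:R)%:C)); last first.
  by move=> k _; rewrite /= cintZ ?ortho //; exact: good_psiM.
rewrite (bigD1 (Ordinal hm)) //= eqxx mulr1 big1 ?addr0 // => i.
by rewrite -val_eqE /= => /negbTE ->; rewrite mulr0.
Qed.

Lemma good_lin (a : nat -> R[i]) K : good (fun x => \sum_(m < K) a m * ps m x).
Proof.
have := @good_sum R K (fun m x => a m * ps m x); apply=> m.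
by apply: good_mul; [exact: good_cst | exact: good_psi].
Qed.

Lemma Wl (a b : nat -> R[i]) K :
  cint (fun x => (\sum_(m < K) a m * ps m x) * (\sum_(k < K) b k * ps k x)^*%R)
  = \sum_(k < K) a k * (b k)^*%R.
Proof.
have gF : forall k, good ((fun k x => (b k)^*%R * ((\sum_(m < K) a m * ps m x) * (ps k x)^*%R)) k).
  move=> k; apply: good_mul; first exact: good_cst.
  by apply: good_mul; [exact: good_lin | apply: good_conj; exact: good_psi].
have h := @cint_sum R K _ gF.
transitivity (\sum_(k < K) cint ((fun k x => (b k)^*%R * ((\sum_(m < K) a m * ps m x) * (ps k x)^*%R)) k)).
  rewrite -h; congr cint; apply/funext=> x; rewrite rmorph_sum mulr_sumr.
  apply: eq_bigr => k _; cbv beta; rewrite rmorphM; ring.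
apply: eq_bigr => k _; rewrite cintZ; last first.
  by apply: good_mul; [exact: good_lin | apply: good_conj; exact: good_psi].
by rewrite proj // mulrC.
Qed.

Definition A m l := cint (fun x => eix x * ps l x * (ps m x)^*%R).

Lemma expand l N : (l.+1 < N)%N -> forall x, eix x * ps l x = \sum_(m < N) A m l * ps m x.
Proof.
move=> hN x.
have [B HB] := spanB.
pose d m := \sum_(i < l.+1) c n l i * B i.+1 m.
have hd : forall N0, (l.+1 < N0)%N -> forall y, eix y * ps l y = \sum_(m < N0) d m * ps m y.
  move=> N0 hN0 y; rewrite /psi; set E := (expR _)%:C.
  transitivity (E * \sum_(i < l.+1) c n l i * eix y ^+ i.+1).
    rewrite /Ppoly mulrCA; congr (_ * _); rewrite mulr_sumr; apply: eq_bigr => i _; rewrite exprS; ring.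
  transitivity (E * \sum_(i < l.+1) c n l i * \sum_(m < N0) B i.+1 m * P m y).
    congr (_ * _); apply: eq_bigr => i _; rewrite -(proj2 (HB i.+1) N0 _ y) //.
    exact: leq_ltn_trans (ltn_ord i) hN0.
  rewrite /d mulr_sumr.
  under [RHS]eq_bigr do rewrite mulr_suml.
  rewrite exchange_big; apply: eq_bigr => i _.
  rewrite !mulr_sumr; apply: eq_bigr => m _; ring.
have hA : forall m, A m l = d m.
  move=> m; rewrite /A.
  rewrite (_ : (fun x => eix x * ps l x * (ps m x)^*%R) =
     (fun x => (\sum_(k < maxn m.+1 l.+2) d k * ps k x) * (ps m x)^*%R)).
    by rewrite proj // leq_maxl.
  by apply/funext => y; rewrite (hd (maxn m.+1 l.+2)) ?leq_maxr.
by rewrite (hd N hN x); apply: eq_bigr => m _; rewrite hA.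
Qed.

Lemma good_Kn lam : good (fun m => Kn V c n lam m).
Proof.
have := @good_sum R n (fun l m => ps l lam * (ps l m)^*%R); apply=> l.
by apply: good_mul; [exact: good_cst | apply: good_conj; exact: good_psi].
Qed.

Lemma Ksq_C lam x : (sqnorm (Kn V c n lam x))%:C =
  (\sum_(l < n) (ps l lam)^*%R * ps l x) * (\sum_(l < n) (ps l lam)^*%R * ps l x)^*%R.
Proof.
have -> : \sum_(l < n) (ps l lam)^*%R * ps l x = (Kn V c n lam x)^*%R.
  rewrite /Kn conj_sum; apply: eq_bigr => l _; by rewrite conjM conjK.
by rewrite sqnormE conjCK mulrC.
Qed.

End Main.

Lemma bnd2 (R : realType) (r s a b : R) : 0 <= a -> 0 <= b -> r ^+ 2 + s ^+ 2 <= a * b -> 2 * r <= a + b.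
Proof.
move=> ha hb h.
have hs : 0 <= s ^+ 2 := sqr_ge0 s.
have hab : 0 <= (a - b) ^+ 2 := sqr_ge0 _.
case: (lerP (2 * r) (a + b)) => // hlt.
have h2 : (a + b) * (a + b) < (2 * r) * (2 * r).
  apply: (@le_lt_trans _ _ ((a + b) * (2 * r))).
    apply: ler_wpM2l; [exact: addr_ge0 | exact: ltW].
  rewrite ltr_pM2r //; apply: le_lt_trans hlt; exact: addr_ge0.
exfalso; nra.
Qed.

Lemma bnd1 (R : realType) (w : R[i]) (a b : R) : 0 <= a -> 0 <= b -> sqnorm w <= a * b ->
  `|w| <= (2^-1 * (a + b))%:C.
Proof.
move=> ha hb h; rewrite normc_def lecR.
have hp : 0 <= 2^-1 * (a + b) by apply: mulr_ge0; [rewrite invr_ge0 | exact: addr_ge0].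
rewrite -(ger0_norm hp) -sqrtr_sqr ler_sqrt ?sqr_ge0 //.
have hab : 0 <= (a - b) ^+ 2 := sqr_ge0 _.
move: h; rewrite /sqnorm => h.
apply: (le_trans h); nra.
Qed.

Lemma bnd2w (R : realType) (w : R[i]) (a b : R) : 0 <= a -> 0 <= b -> sqnorm w <= a * b ->
  2 * complex.Re w <= a + b.
Proof. by move=> ha hb h; apply: (bnd2 (s := complex.Im w)). Qed.

Section Fin.
Variable R : realType.
Variable V : R -> R.
Variable c : nat -> nat -> nat -> R[i].
Hypothesis HVc : continuous (fun t => V (cos t)).
Hypothesis gs : gram_schmidt_coefs V c.
Variable N : nat.
Variable lam : R.
Local Notation n := N.+1.
Local Notation ps := (psi V c N.+1).
Local Notation AA := (A V c N.+1).
Local Notation z := (eix lam).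

Definition aa (l : nat) : R[i] := (ps l lam)^*%R.
Definition ff (x : R) : R[i] := \sum_(l < n) aa l * ps l x.
Definition gg (m : nat) : R[i] := \sum_(l < n) aa l * AA m l.
Definition bb (m : nat) : R[i] := if (m < n)%N then aa m else 0.
Definition TT : R[i] := \sum_(l < n) aa l * ps l lam.
Definition gam : R[i] := aa N * AA n N * ps n lam.

Lemma good_ff : good ff.
Proof. exact: good_lin. Qed.

Lemma P0 : cint (fun x => ff x * (ff x)^*%R) = TT.
Proof. by rewrite /ff Wl //; apply: eq_bigr => l _; rewrite /aa conjK. Qed.

Lemma eixf x : eix x * ff x = \sum_(m < n.+1) gg m * ps m x.
Proof.
rewrite /ff mulr_sumr /gg.
under [RHS]eq_bigr do rewrite mulr_suml.
rewrite exchange_big; apply: eq_bigr => l _.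
rewrite mulrCA (@expand _ _ _ HVc gs n l n.+1); last by rewrite ltnS ltn_ord.
rewrite mulr_sumr; apply: eq_bigr => m _; by rewrite mulrA.
Qed.

Lemma fext x : ff x = \sum_(m < n.+1) bb m * ps m x.
Proof.
rewrite big_ord_recr /= /bb ltnn mul0r addr0 /ff; apply: eq_bigr => m _; by rewrite ltn_ord.
Qed.

Lemma Qval : cint (fun x => eix x * ff x * (ff x)^*%R) = z * TT - gam.
Proof.
rewrite (_ : (fun x => eix x * ff x * (ff x)^*%R) = fun x =>
   (\sum_(m < n.+1) gg m * ps m x) * (\sum_(m < n.+1) bb m * ps m x)^*%R); last first.
  by apply/funext => x; rewrite eixf fext.
rewrite Wl // big_ord_recr /= {2}/bb ltnn conjC0 mulr0 addr0.
rewrite (eq_bigr (fun k : 'I_n => \sum_(l < n) aa l * (AA k l * ps k lam))); last first.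
  move=> k _; rewrite /bb ltn_ord /aa conjCK /gg mulr_suml; apply: eq_bigr => l _; by rewrite mulrA.
rewrite exchange_big /=.
rewrite (eq_bigr (fun l : 'I_n => aa l * \sum_(k < n) AA k l * ps k lam)); last first.
  by move=> l _; rewrite mulr_sumr.
rewrite big_ord_recr /=.
have hN : \sum_(k < n) AA k N * ps k lam = z * ps N lam - AA n N * ps n lam.
  by rewrite (@expand _ _ _ HVc gs n N n.+1) // [in RHS]big_ord_recr /= addrK.
rewrite hN.
rewrite (eq_bigr (fun l : 'I_N => aa l * (z * ps l lam))); last first.
  by move=> l _; rewrite (@expand _ _ _ HVc gs n l n) //= ltnS ltn_ord.
rewrite /TT big_ord_recr /= /gam.
rewrite (_ : \sum_(l < N) aa l * (z * ps l lam) = z * \sum_(l < N) aa l * ps l lam); last first.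
  by rewrite mulr_sumr; apply: eq_bigr => l _; rewrite mulrCA.
ring.
Qed.

Lemma Kff m : (sqnorm (Kn V c n lam m))%:C = ff m * (ff m)^*%R.
Proof. exact: Ksq_C. Qed.

Lemma good_G : good (fun m => eix m * ff m * (ff m)^*%R).
Proof. by apply: good_mul; [apply: good_mul; [exact: good_eix | exact: good_ff] | apply: good_conj; exact: good_ff]. Qed.
Lemma good_F : good (fun m => ff m * (ff m)^*%R).
Proof. by apply: good_mul; [exact: good_ff | apply: good_conj; exact: good_ff]. Qed.

Lemma res1 : cint (fun m => (z - eix m) * (sqnorm (Kn V c n lam m))%:C) = gam.
Proof.
rewrite (_ : (fun m => (z - eix m) * (sqnorm (Kn V c n lam m))%:C) =
   fun m => z * (ff m * (ff m)^*%R) - eix m * ff m * (ff m)^*%R); last first.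
  by apply/funext => m; rewrite Kff; ring.
rewrite (cintB (f := fun m => z * (ff m * (ff m)^*%R)) (g := fun m => eix m * ff m * (ff m)^*%R)); last first.
- exact: good_G.
- by apply: good_mul; [exact: good_cst | exact: good_F].
rewrite (@cintZ _ z (fun m => ff m * (ff m)^*%R)); last exact: good_F.
rewrite P0 Qval; ring.
Qed.

Lemma TTr : TT^*%R = TT.
Proof. rewrite /TT conj_sum; apply: eq_bigr => l _; by rewrite conjM /aa conjK mulrC. Qed.

Lemma res2 : cint (fun m => (sqnorm (z - eix m) * sqnorm (Kn V c n lam m))%:C) = z * gam^*%R + z^*%R * gam.
Proof.
rewrite (_ : (fun m => (sqnorm (z - eix m) * sqnorm (Kn V c n lam m))%:C) =
   fun m => (2%:R * (ff m * (ff m)^*%R) - z * (eix m * ff m * (ff m)^*%R)^*%R) - z^*%R * (eix m * ff m * (ff m)^*%R)); last first.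
  apply/funext => m; rewrite realM sqnormE Kff conjB !conjM conjK.
  have h1 := eixJ lam; have h2 := eixJ m.
  transitivity ((z * z^*%R + eix m * (eix m)^*%R) * (ff m * (ff m)^*%R) - z * ((eix m)^*%R * (ff m)^*%R * ff m) - z^*%R * (eix m * ff m * (ff m)^*%R)).
    ring.
  rewrite h1 h2; ring.
have gGJ : good (fun m => z * (eix m * ff m * (ff m)^*%R)^*%R).
  by apply: good_mul; [exact: good_cst | apply: good_conj; exact: good_G].
rewrite (cintB (f := fun m => 2%:R * (ff m * (ff m)^*%R) - z * (eix m * ff m * (ff m)^*%R)^*%R) (g := fun m => z^*%R * (eix m * ff m * (ff m)^*%R))); last first.
- by apply: good_mul; [exact: good_cst | exact: good_G].
- apply: good_add; first by apply: good_mul; [exact: good_cst | exact: good_F].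
  exact: good_opp.
rewrite (cintB (f := fun m => 2%:R * (ff m * (ff m)^*%R)) (g := fun m => z * (eix m * ff m * (ff m)^*%R)^*%R)) //; last first.
  by apply: good_mul; [exact: good_cst | exact: good_F].
rewrite (@cintZ _ 2%:R (fun m => ff m * (ff m)^*%R)); last exact: good_F.
rewrite (@cintZ _ z (fun m => (eix m * ff m * (ff m)^*%R)^*%R)); last first.
  by apply: good_conj; exact: good_G.
rewrite (@cintZ _ z^*%R (fun m => eix m * ff m * (ff m)^*%R)); last exact: good_G.
rewrite (cintJ (f := fun m => eix m * ff m * (ff m)^*%R)); last exact: good_G.
rewrite P0 Qval conjB conjM TTr.
have h1 := eixJ lam.
transitivity (z * gam^*%R + z^*%R * gam + 2%:R * TT * (1 - z * z^*%R)); first ring.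
by rewrite h1 subrr mulr0 addr0.
Qed.

Lemma A_bound : sqnorm (AA n N) <= 1.
Proof.
have e := @expand _ _ _ HVc gs n N n.+1 (ltnSn _).
have W := Wl HVc gs n (fun m => AA m N) (fun m => AA m N) n.+1.
rewrite (_ : (fun x => (\sum_(m < n.+1) AA m N * ps m x) * (\sum_(k < n.+1) AA k N * ps k x)^*%R)
   = fun x => ps N x * (ps N x)^*%R) in W; last first.
  apply/funext => x; rewrite -!(e x) conjM.
  transitivity ((eix x * (eix x)^*%R) * (ps N x * (ps N x)^*%R)); first ring.
  by rewrite eixJ mul1r.
rewrite ortho in W.
move: W; rewrite eqxx => W.
have W' := congr1 (@complex.Re R) W.
rewrite Re_sum in W'.
rewrite (eq_bigr (fun k : 'I_n.+1 => sqnorm (AA k N))) in W'; last first.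
  by move=> k _; rewrite -sqnormE.
rewrite big_ord_recr /= in W'.
have hs : 0 <= \sum_(i < n) sqnorm (AA i N) by apply: sumr_ge0 => i _; exact: sqnorm_ge0.
move: W' hs; set s := \sum_(i < n) _; move=> W' hs.
have W2 : (1:R) = s + sqnorm (AA n N) := W'.
rewrite W2; lra.
exact: gs.
Qed.

Lemma ineq1 : `| cint (fun m => (z - eix m) * (sqnorm (Kn V c n lam m))%:C) |
   <= (2^-1 * (sqnorm (ps N lam) + sqnorm (ps n lam)))%:C.
Proof.
rewrite res1 /gam; apply: bnd1; try exact: sqnorm_ge0.
rewrite [sqnorm (aa N * _ * _)]sqnormM [sqnorm (aa N * _)]sqnormM /aa sqnormJ.
have hA := A_bound; have hA0 := sqnorm_ge0 (AA n N).
have h := mulr_ge0 (sqnorm_ge0 (ps N lam)) (sqnorm_ge0 (ps n lam)).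
rewrite mulrAC; exact: ler_piMr.
Qed.

Lemma ineq2 : Rintegral (@lebesgue_measure R) (@Ipi R)
   (fun m => sqnorm (z - eix m) * sqnorm (Kn V c n lam m))
   <= sqnorm (ps N lam) + sqnorm (ps n lam).
Proof.
rewrite Rint_cint res2.
have -> : z * gam^*%R = (z^*%R * gam)^*%R.
  by rewrite [RHS]conjM conjK.
rewrite ReD ReJ -mulr2n -mulr_natl.
apply: bnd2w; try exact: sqnorm_ge0.
rewrite sqnormM sqnormJ sqnorm_eix mul1r /gam.
rewrite [sqnorm (aa N * _ * _)]sqnormM [sqnorm (aa N * _)]sqnormM /aa sqnormJ.
have hA := A_bound; have hA0 := sqnorm_ge0 (AA n N).
have h := mulr_ge0 (sqnorm_ge0 (ps N lam)) (sqnorm_ge0 (ps n lam)).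
rewrite mulrAC; exact: ler_piMr.
Qed.
End Fin.

Lemma good_sub (R : realType) (l : R) : good (fun m => eix l - eix m).
Proof. by apply: good_add; [exact: good_cst | apply: good_opp; exact: good_eix]. Qed.

Unset Implicit Arguments. Set Strict Implicit.

Theorem lemma1 (R : realType) (V : R -> R) (c : nat -> nat -> nat -> R[i])
    (rho : R -> R) (a b C1 C2 : R) :
  {within `[-1, 1]%classic, continuous V} ->
  (forall x, x \in `[-1, 1] -> 0 <= V x) ->
  (forall x, x \in `]- pi, pi[ ->
     derivable (fun t => V (cos t)) x 1 /\
     derivable (derive1 (fun t => V (cos t))) x 1) ->
  {within `]- pi, pi[%classic, continuous (derive1 (derive1 (fun t => V (cos t))))} ->
  gram_schmidt_coefs V c ->
  limit_density V rho ->
  a < b -> `]a, b[ `<=` limit_support rho ->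
  0 < C1 -> 0 < C2 ->
  (forall x, x \in `]a, b[ ->
     derivable (derive1 (derive1 (fun t => V (cos t)))) x 1 /\
     `|derive1 (derive1 (derive1 (fun t => V (cos t)))) x| <= C1) ->
  (forall x, x \in `]a, b[ -> C2 <= rho x) ->
  forall delta : R, 0 < delta ->
  forall (n : nat) (lam : R), lam \in `[- pi, pi] ->
  let Ksq := fun x y => sqnorm (Kn V c n x y) in
  let d2 := fun x y : R => sqnorm (eix x - eix y) in
  let S := fun x => sqnorm (psi V c n n.-1 x) + sqnorm (psi V c n n x) in
  let mu := @lebesgue_measure R in
  [/\ `| cint (fun m => (eix lam - eix m) * (Ksq lam m)%:C) | <= (2^-1 * S lam)%:C,
      Rintegral mu (@Ipi R) (fun m => d2 lam m * Ksq lam m) <= S lam,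
      Rintegral mu (@Ipi R) (fun l => Rintegral mu (@Ipi R) (fun m => d2 l m * Ksq l m)) <= 2,
      Rintegral mu (@Ipi R `&` [set m | delta < Num.sqrt (d2 lam m)]) (fun m => Ksq lam m)
        <= delta ^- 2 * S lam
    & Rintegral mu (@Ipi R) (fun l =>
        Rintegral mu (@Ipi R `&` [set m | delta < Num.sqrt (d2 l m)]) (fun m => Ksq l m))
        <= 2 * delta ^- 2].
Proof.
move=> HV _ _ _ gs _ _ _ _ _ _ _ delta hdelta n lam _.
have HVc := Vcos_cont HV.
cbv zeta.
have KsqC : forall l m, 0 <= sqnorm (Kn V c n l m) by move=> l m; exact: sqnorm_ge0.
have Sge0 : forall x, 0 <= sqnorm (psi V c n n.-1 x) + sqnorm (psi V c n n x).
  by move=> x; apply: addr_ge0; exact: sqnorm_ge0.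
have Scont : continuous (fun x => sqnorm (psi V c n n.-1 x) + sqnorm (psi V c n n x)).
  by apply: cD; apply: good_sqnorm; exact: good_psi.
have hk : forall k, Rintegral (@lebesgue_measure R) (@Ipi R) (fun x => sqnorm (psi V c n k x)) = 1.
  move=> k; rewrite Rint_cint.
  rewrite (_ : (fun x => (sqnorm (psi V c n k x))%:C) = fun x => psi V c n k x * (psi V c n k x)^*%R); last first.
    by apply/funext => x; rewrite sqnormE.
  by rewrite ortho // eqxx.
have HS : Rintegral (@lebesgue_measure R) (@Ipi R) (fun x => sqnorm (psi V c n n.-1 x) + sqnorm (psi V c n n x)) = 2.
  rewrite RintD ?hk //; apply: good_sqnorm; exact: good_psi.
have K0 : forall l m, sqnorm (Kn V c 0 l m) = 0.
  by move=> l m; rewrite /Kn big_ord0 /sqnorm expr2 mulr0 addr0.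
have H2 : forall l, Rintegral (@lebesgue_measure R) (@Ipi R)
     (fun m => sqnorm (eix l - eix m) * sqnorm (Kn V c n l m))
     <= sqnorm (psi V c n n.-1 l) + sqnorm (psi V c n n l).
  move=> l; case En : n => [|N].
    rewrite (_ : (fun m => _) = fun _ => 0); first by rewrite Rint0 -En Sge0.
    by apply/funext => m; rewrite K0 mulr0.
  exact: ineq2.
have H4 : forall l, Rintegral (@lebesgue_measure R)
     (@Ipi R `&` [set m | delta < Num.sqrt (sqnorm (eix l - eix m))]) (fun m => sqnorm (Kn V c n l m))
     <= delta ^- 2 * (sqnorm (psi V c n n.-1 l) + sqnorm (psi V c n n l)).
  move=> l.
  have hd0 : 0 <= delta ^- 2 by rewrite invr_ge0 exprn_ge0 // ltW.
  apply: (@le_trans _ _ (delta ^- 2 * Rintegral (@lebesgue_measure R) (@Ipi R)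
     (fun m => sqnorm (eix l - eix m) * sqnorm (Kn V c n l m)))); last exact: ler_wpM2l.
  have hc : continuous (fun m => sqnorm (eix l - eix m) * sqnorm (Kn V c n l m)).
    by apply: cM; apply: good_sqnorm; [exact: good_sub | exact: good_Kn].
  rewrite -RintZ //.
  apply: lower_mono.
  - exact: mIpi.
  - exact: subIsetl.
  - by move=> m _.
  - by move=> m _; apply: mulr_ge0 => //; apply: mulr_ge0; exact: sqnorm_ge0.
  - move=> m [_ /= hm].
    have hx := sqnorm_ge0 (eix l - eix m).
    have hs := sqr_sqrtr hx.
    have hs0 := sqrtr_ge0 (sqnorm (eix l - eix m)).
    have hd : delta ^+ 2 < sqnorm (eix l - eix m).
      rewrite -hs; nra.
    rewrite ler_pdivlMl ?exprn_gt0 //.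
    by apply: ler_wpM2r => //; exact: ltW.
  - by apply: int_cont; apply: cM => //; exact: cst_continuous.
split.
- case En : n => [|N].
    rewrite (_ : (fun m => _) = fun _ => 0); last first.
      by apply/funext => m; rewrite K0 mulr0.
    by rewrite cint0 normr0 lecR; apply: mulr_ge0; [rewrite invr_ge0 | rewrite -En; exact: Sge0].
  exact: ineq1.
- exact: H2.
- apply: (@le_trans _ _ (Rintegral (@lebesgue_measure R) (@Ipi R)
     (fun x => sqnorm (psi V c n n.-1 x) + sqnorm (psi V c n n x)))); last by rewrite HS.
  apply: lower_mono.
  + exact: mIpi.
  + by [].
  + move=> l _; apply: Rintegral_ge0 => m _; apply: mulr_ge0 => //; exact: sqnorm_ge0.
  + by move=> x _.
  + by move=> l _; exact: H2.
  + exact: int_cont.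
- exact: H4.
- apply: (@le_trans _ _ (Rintegral (@lebesgue_measure R) (@Ipi R)
     (fun x => delta ^- 2 * (sqnorm (psi V c n n.-1 x) + sqnorm (psi V c n n x))))).
    apply: lower_mono.
    + exact: mIpi.
    + by [].
    + by move=> l _; apply: Rintegral_ge0 => m _.
    + by move=> x _; apply: mulr_ge0 => //; rewrite invr_ge0 exprn_ge0 // ltW.
    + by move=> l _; exact: H4.
    + by apply: int_cont; apply: cM => //; exact: cst_continuous.
  by rewrite RintZ // HS mulrC.
Qed.
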